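(* Let $G$ be a circle and let $x_1,\dots,x_n,y_1,\dots,y_n\in G$ be arbitrary (not necessarily distinct). Then there exists $i\in\{1,\dots,n\}$ such that $$\sum_{k=1}^n d(x_i,x_k)\le\sum_{k=1}^n d(x_i,y_k).$$
   Context: A circle is a network consisting of a single closed simple curve (e.g. the unit circle $S^1$); $d(x,y)$ denotes the length of the shorter arc between $x$ and $y$. *)

(* Defs.v *)
From Stdlib Require Import Reals Lra.
Open Scope R_scope.

(* A circle of (total) length L > 0, parametrised by arc length:
   its points are the reals t with 0 <= t < L (the point at arc-length t
   from a fixed base point). *)
Definition on_circle (L t : R) : Prop := 0 <= t < L.

Definition circ_dist (L x y : R) : R := Rmin (Rabs (x - y)) (L - Rabs (x - y)).

Fixpoint sum_1n (n : nat) (f : nat -> R) : R :=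
  match n with
  | O => 0
  | S m => sum_1n m f + f (S m)
  end.

(* Main.v *)
Require Import Defs.
From Stdlib Require Import Reals Lra Psatz List Classical.
Open Scope R_scope.

Definition anti (L z : R) : R := if Rlt_dec z (L/2) then z + L/2 else z - L/2.
Definition gz (L z p : R) : R := 2 * circ_dist L p z - L/2.

Ltac crush := unfold circ_dist, Rmin, Rabs in *;
  repeat match goal with
  | |- context [Rcase_abs ?a] => destruct (Rcase_abs a)
  | |- context [Rle_dec ?a ?b] => destruct (Rle_dec a b)
  | |- context [Rlt_dec ?a ?b] => destruct (Rlt_dec a b)
  end; lra.

Lemma cd_sym L p q : circ_dist L p q = circ_dist L q p.
Proof. crush. Qed.

Lemma cd_anti L p z : 0 < L -> 0 <= p < L -> 0 <= z < L ->
  circ_dist L (anti L p) z = L/2 - circ_dist L p z.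
Proof. intros; unfold anti; crush. Qed.

Lemma anti_range L p : 0 < L -> 0 <= p < L -> 0 <= anti L p < L.
Proof. intros; unfold anti; destruct (Rlt_dec p (L/2)); lra. Qed.

Lemma cd_0L L z : 0 < L -> 0 <= z < L -> circ_dist L 0 z = circ_dist L L z.
Proof. intros; crush. Qed.

Lemma cdA1 L z p : 0 < L -> 0 <= z < L/2 -> 0 <= p <= z -> circ_dist L p z = z - p.
Proof. intros; crush. Qed.
Lemma cdA2 L z p : 0 < L -> 0 <= z < L/2 -> z <= p <= z + L/2 -> circ_dist L p z = p - z.
Proof. intros; crush. Qed.
Lemma cdA3 L z p : 0 < L -> 0 <= z < L/2 -> z + L/2 <= p <= L -> circ_dist L p z = L - p + z.
Proof. intros; crush. Qed.
Lemma cdB1 L z p : 0 < L -> L/2 <= z < L -> 0 <= p <= z - L/2 -> circ_dist L p z = L - z + p.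
Proof. intros; crush. Qed.
Lemma cdB2 L z p : 0 < L -> L/2 <= z < L -> z - L/2 <= p <= z -> circ_dist L p z = z - p.
Proof. intros; crush. Qed.
Lemma cdB3 L z p : 0 < L -> L/2 <= z < L -> z <= p <= L -> circ_dist L p z = p - z.
Proof. intros; crush. Qed.

Fixpoint incr (l : list R) : Prop :=
  match l with
  | a :: t => match t with b :: _ => a < b /\ incr t | nil => True end
  | nil => True
  end.

Fixpoint T (g B : R -> R) (a : R) (l : list R) : R :=
  match l with
  | nil => 0
  | b :: r => (g b - g a) / (b - a) * (B a - B b) + T g B b r
  end.

Lemma last_nd (c : R) r a b : last (c :: r) a = last (c :: r) b.
Proof.
  revert c; induction r as [|d r IH]; intros c; [reflexivity|].
  change (last (d :: r) a = last (d :: r) b). apply IH.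
Qed.

Lemma last_cons' (b : R) r a : last (b :: r) a = last r b.
Proof.
  destruct r as [|c r]; [reflexivity|].
  change (last (c :: r) a = last (c :: r) b). apply last_nd.
Qed.

Lemma last_app' (l1 l2 : list R) a : last (l1 ++ l2) a = last l2 (last l1 a).
Proof.
  revert a; induction l1 as [|b l1 IH]; intros a; [reflexivity|].
  rewrite <- app_comm_cons, !last_cons'. apply IH.
Qed.

Lemma last_in (l : list R) a : In (last l a) (a :: l).
Proof.
  revert a; induction l as [|b l IH]; intros a; [simpl; auto|].
  rewrite last_cons'. right. apply IH.
Qed.

Lemma T_app (g B : R -> R) a l1 l2 : T g B a (l1 ++ l2) = T g B a l1 + T g B (last l1 a) l2.
Proof.
  revert a; induction l1 as [|b l1 IH]; intros a; [simpl; lra|].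
  rewrite <- app_comm_cons. cbn [T]. rewrite IH, last_cons'. lra.
Qed.

Lemma incr_app a l1 l2 : incr (a :: l1 ++ l2) -> incr (a :: l1) /\ incr (last l1 a :: l2).
Proof.
  revert a; induction l1 as [|b l1 IH]; intros a H; [simpl in *; split; auto|].
  rewrite last_cons'. rewrite <- app_comm_cons in H.
  change (a < b /\ incr (b :: l1 ++ l2)) in H.
  destruct H as [H1 H2]. destruct (IH b H2) as [I1 I2].
  split; [|exact I2]. change (a < b /\ incr (b :: l1)). auto.
Qed.

Lemma incr_tail a l : incr (a :: l) -> incr l.
Proof. destruct l; simpl; tauto. Qed.

Lemma incr_bounds a l : incr (a :: l) -> forall x, In x (a :: l) -> a <= x <= last l a.
Proof.
  revert a; induction l as [|b l IH]; intros a H x Hx.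
  - simpl in *. destruct Hx as [<-|[]]. lra.
  - rewrite last_cons'. simpl in H. destruct H as [Hab H].
    destruct Hx as [<-|Hx].
    + assert (b <= last l b) by (apply (IH b H b); left; auto). lra.
    + specialize (IH b H x Hx). lra.
Qed.

Lemma split_at (c : R) a l : In c (a :: l) -> exists l1 l2, l = l1 ++ l2 /\ last l1 a = c.
Proof.
  intros [<-|H].
  - exists nil, l. auto.
  - destruct (in_split _ _ H) as [l1 [l2 ->]]. exists (l1 ++ c :: nil), l2.
    rewrite <- app_assoc. split; [reflexivity|]. apply last_last.
Qed.

Lemma T_seg (g B : R -> R) lo hi s a l :
  incr (a :: l) -> (forall x, In x (a :: l) -> lo <= x <= hi) ->
  (forall p q, lo <= p <= hi -> lo <= q <= hi -> g q - g p = s * (q - p)) ->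
  T g B a l = s * (B a - B (last l a)).
Proof.
  revert a; induction l as [|b l IH]; intros a Hi Hb Ha; simpl T.
  - simpl. lra.
  - rewrite last_cons'. simpl in Hi. destruct Hi as [Hab Hi].
    rewrite IH; auto.
    2: { intros x Hx; apply Hb; right; auto. }
    rewrite (Ha a b) by (apply Hb; simpl; auto).
    field_simplify; [|lra]. lra.
Qed.

Lemma T_ext g1 g2 B a l : (forall p, g1 p = g2 p) -> T g1 B a l = T g2 B a l.
Proof. intros H; revert a; induction l; intros; simpl; auto. rewrite !H, IHl. auto. Qed.

Lemma T_add g1 g2 B a l : T (fun p => g1 p + g2 p) B a l = T g1 B a l + T g2 B a l.
Proof. revert a; induction l; intros; simpl; [lra|]. rewrite IHl. unfold Rdiv. ring. Qed.

Lemma T_zero B a l : T (fun _ => 0) B a l = 0.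
Proof. revert a; induction l; intros; simpl; auto. rewrite IHl. unfold Rdiv. ring. Qed.

Definition Bof (phi : R -> R) (p : R) : R := if Rlt_dec 0 (phi p) then 1 else 0.

Lemma term_le phi a b : a < b -> (phi b - phi a) / (b - a) * (Bof phi a - Bof phi b) <= 0.
Proof.
  intros H. unfold Bof. destruct (Rlt_dec 0 (phi a)), (Rlt_dec 0 (phi b)); try lra.
  - assert (Hq : (phi b - phi a) / (b - a) * (b - a) = phi b - phi a) by (field; lra).
    nra.
  - assert (Hq : (phi b - phi a) / (b - a) * (b - a) = phi b - phi a) by (field; lra).
    nra.
Qed.

Lemma term_lt phi a b : a < b -> Bof phi a <> Bof phi b ->
  (phi b - phi a) / (b - a) * (Bof phi a - Bof phi b) < 0.
Proof.
  intros H Hn. unfold Bof in *. destruct (Rlt_dec 0 (phi a)), (Rlt_dec 0 (phi b)); try lra.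
  - assert (Hq : (phi b - phi a) / (b - a) * (b - a) = phi b - phi a) by (field; lra).
    nra.
  - assert (Hq : (phi b - phi a) / (b - a) * (b - a) = phi b - phi a) by (field; lra).
    nra.
Qed.

Lemma T_le phi a l : incr (a :: l) -> T phi (Bof phi) a l <= 0.
Proof.
  revert a; induction l as [|b l IH]; intros a H; simpl; [lra|].
  simpl in H. destruct H as [H1 H2].
  pose proof (term_le phi a b H1). specialize (IH b H2). lra.
Qed.

Lemma T_lt phi a l p q : incr (a :: l) -> In p (a :: l) -> In q (a :: l) ->
  Bof phi p <> Bof phi q -> T phi (Bof phi) a l < 0.
Proof.
  revert a p q; induction l as [|b l IH]; intros a p q H Hp Hq Hn.
  - simpl in Hp, Hq. destruct Hp as [<-|[]]; destruct Hq as [<-|[]]; congruence.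
  - simpl T. simpl in H. destruct H as [H1 H2].
    destruct (Req_dec_T (Bof phi a) (Bof phi b)) as [E|E].
    + assert (Hp' : In p (b :: l) \/ Bof phi p = Bof phi b).
      { destruct Hp as [<-|Hp]; auto. }
      assert (Hq' : In q (b :: l) \/ Bof phi q = Bof phi b).
      { destruct Hq as [<-|Hq]; auto. }
      pose proof (term_le phi a b H1).
      destruct Hp' as [Hp'|Hp'], Hq' as [Hq'|Hq'].
      * specialize (IH b p q H2 Hp' Hq' Hn). lra.
      * rewrite Hq' in Hn. specialize (IH b p b H2 Hp' (or_introl eq_refl) Hn). lra.
      * rewrite Hp' in Hn. specialize (IH b b q H2 (or_introl eq_refl) Hq' Hn). lra.
      * congruence.
    + pose proof (term_lt phi a b H1 E). pose proof (T_le phi b l H2). lra.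
Qed.

Fixpoint ins (s : R) (l : list R) : list R :=
  match l with
  | nil => s :: nil
  | a :: t => if Rlt_dec s a then s :: a :: t
              else if Req_dec_T s a then a :: t else a :: ins s t
  end.

Lemma ins_incr_aux s t a : a < s -> incr (a :: t) -> incr (a :: ins s t).
Proof.
  revert a; induction t as [|b t IH]; intros a Ha H; simpl; [split; auto|].
  simpl in H. destruct H as [Hab H].
  destruct (Rlt_dec s b); [simpl; repeat split; auto; lra|].
  destruct (Req_dec_T s b); [simpl; split; auto|].
  split; [auto|]. apply IH; auto. lra.
Qed.

Lemma ins_incr s l : incr l -> incr (ins s l).
Proof.
  destruct l as [|a t]; intros H; simpl; [auto|].
  destruct (Rlt_dec s a); [simpl; split; auto|].
  destruct (Req_dec_T s a); [auto|].
  apply ins_incr_aux; auto. lra.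
Qed.

Lemma ins_in s l : In s (ins s l).
Proof.
  induction l as [|a t IH]; simpl; [auto|].
  destruct (Rlt_dec s a); [simpl; auto|].
  destruct (Req_dec_T s a); simpl; auto.
Qed.

Lemma ins_keep s l x : In x l -> In x (ins s l).
Proof.
  induction l as [|a t IH]; intros Hx; simpl in *; [contradiction|].
  destruct (Rlt_dec s a); [simpl; auto|].
  destruct (Req_dec_T s a); simpl; [auto|]. destruct Hx; auto.
Qed.

Lemma ins_sub s l x : In x (ins s l) -> x = s \/ In x l.
Proof.
  induction l as [|a t IH]; intros Hx; simpl in *.
  - destruct Hx as [<-|[]]; auto.
  - destruct (Rlt_dec s a); [simpl in Hx; destruct Hx as [<-|Hx]; auto|].
    destruct (Req_dec_T s a); simpl in Hx; [auto|].
    destruct Hx as [<-|Hx]; auto. destruct (IH Hx); auto.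
Qed.

Lemma ins_head s t : 0 <= s -> exists t', ins s (0 :: t) = 0 :: t'.
Proof.
  intros H; simpl. destruct (Rlt_dec s 0); [lra|].
  destruct (Req_dec_T s 0); eauto.
Qed.

Lemma build L S : 0 < L -> (forall s, In s S -> 0 <= s < L) ->
  exists t, incr (0 :: t) /\ (forall x, In x (0 :: t) -> 0 <= x <= L) /\ In L t /\
    (forall s, In s S -> In s (0 :: t)).
Proof.
  intros HL. induction S as [|s S IH]; intros HS.
  - exists (L :: nil). split; [simpl; auto|]. split; [|split; [simpl; auto|intros s []]].
    intros x [<-|[<-|[]]]; lra.
  - destruct IH as [t [I1 [I2 [I3 I4]]]]. { intros; apply HS; simpl; auto. }
    assert (Hs : 0 <= s < L) by (apply HS; simpl; auto).
    destruct (ins_head s t (proj1 Hs)) as [t' Ht'].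
    exists t'. rewrite <- Ht'. split; [|split; [|split]].
    + apply ins_incr; auto.
    + intros x Hx. destruct (ins_sub _ _ _ Hx) as [->|Hx']; [lra|]. apply I2; auto.
    + assert (H : In L (ins s (0 :: t))) by (apply ins_keep; right; auto).
      rewrite Ht' in H. destruct H; [lra|auto].
    + intros z [<-|Hz]; [apply ins_in|]. apply ins_keep; auto.
Qed.

Lemma in_pre (w : R) l1 l2 : In w (0 :: l1 ++ l2) -> In w (0 :: l1) \/ In w l2.
Proof. intros [<-|H]; [left; left; auto|]. apply in_app_or in H. destruct H; [left; right|right]; auto. Qed.

Lemma per_z L B t z : 0 < L -> incr (0 :: t) -> (forall x, In x (0 :: t) -> 0 <= x <= L) ->
  last t 0 = L -> 0 <= z < L -> In z (0 :: t) -> In (anti L z) (0 :: t) -> B 0 = B L ->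
  T (gz L z) B 0 t = 4 * (B z - B (anti L z)).
Proof.
  intros HL Hi Hb Hl Hz Inz Ina HB.
  destruct (Rlt_dec z (L/2)) as [c|c].
  - assert (Ea : anti L z = z + L/2) by (unfold anti; destruct (Rlt_dec z (L/2)); lra).
    destruct (split_at z 0 t Inz) as [l1 [l2 [-> E1]]].
    rewrite T_app, E1.
    destruct (incr_app 0 l1 l2 Hi) as [I1 I2]. rewrite E1 in I2.
    pose proof (incr_bounds 0 l1 I1) as Bd1. rewrite E1 in Bd1.
    assert (Ina2 : In (anti L z) (z :: l2)).
    { destruct (in_pre _ _ _ Ina) as [H|H]; [|right; auto].
      specialize (Bd1 _ H). lra. }
    destruct (split_at (anti L z) z l2 Ina2) as [m1 [m2 [-> E2]]].
    rewrite T_app, E2.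
    destruct (incr_app z m1 m2 I2) as [J1 J2]. rewrite E2 in J2.
    pose proof (incr_bounds z m1 J1) as Bd2. rewrite E2 in Bd2.
    assert (Hlast : last m2 (anti L z) = L).
    { rewrite !last_app' in Hl. rewrite E1, E2 in Hl. exact Hl. }
    rewrite (T_seg (gz L z) B 0 z (-2) 0 l1 I1).
    3: { intros p q Hp Hq. unfold gz. rewrite (cdA1 L z p), (cdA1 L z q) by lra. lra. }
    2: { intros w Hw. specialize (Bd1 w Hw). lra. }
    rewrite (T_seg (gz L z) B z (anti L z) 2 z m1 J1).
    3: { intros p q Hp Hq. unfold gz. rewrite (cdA2 L z p), (cdA2 L z q) by lra. lra. }
    2: { intros w Hw. specialize (Bd2 w Hw). lra. }
    rewrite (T_seg (gz L z) B (anti L z) L (-2) (anti L z) m2 J2).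
    3: { intros p q Hp Hq. unfold gz. rewrite (cdA3 L z p), (cdA3 L z q) by lra. lra. }
    2: { intros w Hw. pose proof (incr_bounds _ _ J2 w Hw). rewrite Hlast in H. exact H. }
    rewrite E1, E2, Hlast, <- HB. ring.
  - assert (Ea : anti L z = z - L/2) by (unfold anti; destruct (Rlt_dec z (L/2)); lra).
    destruct (split_at (anti L z) 0 t Ina) as [l1 [l2 [-> E1]]].
    rewrite T_app, E1.
    destruct (incr_app 0 l1 l2 Hi) as [I1 I2]. rewrite E1 in I2.
    pose proof (incr_bounds 0 l1 I1) as Bd1. rewrite E1 in Bd1.
    assert (Inz2 : In z (anti L z :: l2)).
    { destruct (in_pre _ _ _ Inz) as [H|H]; [|right; auto].
      specialize (Bd1 _ H). lra. }
    destruct (split_at z (anti L z) l2 Inz2) as [m1 [m2 [-> E2]]].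
    rewrite T_app, E2.
    destruct (incr_app (anti L z) m1 m2 I2) as [J1 J2]. rewrite E2 in J2.
    pose proof (incr_bounds (anti L z) m1 J1) as Bd2. rewrite E2 in Bd2.
    assert (Hlast : last m2 z = L).
    { rewrite !last_app' in Hl. rewrite E1, E2 in Hl. exact Hl. }
    rewrite (T_seg (gz L z) B 0 (anti L z) 2 0 l1 I1).
    3: { intros p q Hp Hq. unfold gz. rewrite (cdB1 L z p), (cdB1 L z q) by lra. lra. }
    2: { intros w Hw. specialize (Bd1 w Hw). lra. }
    rewrite (T_seg (gz L z) B (anti L z) z (-2) (anti L z) m1 J1).
    3: { intros p q Hp Hq. unfold gz. rewrite (cdB2 L z p), (cdB2 L z q) by lra. lra. }
    2: { intros w Hw. specialize (Bd2 w Hw). lra. }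
    rewrite (T_seg (gz L z) B z L 2 z m2 J2).
    3: { intros p q Hp Hq. unfold gz. rewrite (cdB3 L z p), (cdB3 L z q) by lra. lra. }
    2: { intros w Hw. pose proof (incr_bounds _ _ J2 w Hw). rewrite Hlast in H. exact H. }
    rewrite E1, E2, Hlast, <- HB. ring.
Qed.

Definition lsum (l : list R) : R := fold_right Rplus 0 l.
Definition phiZ (L : R) (Z : list R) (p : R) : R := lsum (map (fun z => gz L z p) Z).

Lemma T_phi L Z B a l : T (phiZ L Z) B a l = lsum (map (fun z => T (gz L z) B a l) Z).
Proof.
  induction Z as [|z Z IH]; simpl.
  - rewrite (T_ext _ (fun _ => 0)) by reflexivity. apply T_zero.
  - rewrite (T_ext _ (fun p => gz L z p + phiZ L Z p)) by reflexivity.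
    rewrite T_add, IH. reflexivity.
Qed.

Lemma phi_anti L Z p : 0 < L -> 0 <= p < L -> (forall z, In z Z -> 0 <= z < L) ->
  phiZ L Z (anti L p) = - phiZ L Z p.
Proof.
  intros HL Hp. induction Z as [|z Z IH]; intros HZ; unfold phiZ in *; simpl; [lra|].
  rewrite IH by (intros; apply HZ; simpl; auto).
  unfold gz. rewrite cd_anti by (auto; apply HZ; simpl; auto). lra.
Qed.

Lemma phi_0L L Z : 0 < L -> (forall z, In z Z -> 0 <= z < L) -> phiZ L Z 0 = phiZ L Z L.
Proof.
  intros HL. induction Z as [|z Z IH]; intros HZ; unfold phiZ in *; simpl; [lra|].
  rewrite IH by (intros; apply HZ; simpl; auto).
  unfold gz. rewrite cd_0L by (auto; apply HZ; simpl; auto). lra.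
Qed.

Lemma sum_1n_lsum n h : sum_1n n h = lsum (map h (seq 1 n)).
Proof.
  induction n as [|n IH]; [reflexivity|].
  rewrite seq_S, map_app. unfold lsum. rewrite fold_right_app. simpl.
  rewrite IH. unfold lsum.
  assert (forall l c, fold_right Rplus c l = fold_right Rplus 0 l + c).
  { induction l; intros; simpl; [lra|]. rewrite IHl. lra. }
  rewrite (H _ (h (S n) + 0)). lra.
Qed.

Lemma lsum_app {A : Type} (h : A -> R) (l1 l2 : list A) : lsum (map h (l1 ++ l2)) = lsum (map h l1) + lsum (map h l2).
Proof. induction l1; simpl; [lra|]. unfold lsum in *. simpl. rewrite IHl1. lra. Qed.

Lemma lsum_ge {A : Type} (h : A -> R) c (l : list A) : (forall z, In z l -> c <= h z) -> c * INR (length l) <= lsum (map h l).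
Proof.
  induction l as [|a l IH]; intros H; [simpl; lra|].
  cbn [length map]. rewrite S_INR. unfold lsum in *. cbn [fold_right].
  assert (c <= h a) by (apply H; simpl; auto).
  assert (c * INR (length l) <= fold_right Rplus 0 (map h l)) by (apply IH; intros; apply H; simpl; auto).
  lra.
Qed.

Lemma phi_x L (x y : nat -> R) (s : list nat) p : 0 < L -> 0 <= p < L -> (forall k, In k s -> 0 <= y k < L) ->
  phiZ L (map x s ++ map (fun k => anti L (y k)) s) p =
  2 * (lsum (map (fun k => circ_dist L p (x k)) s) - lsum (map (fun k => circ_dist L p (y k)) s)).
Proof.
  intros HL Hp. unfold phiZ. rewrite lsum_app, !map_map.
  induction s as [|k s IH]; intros Hy; unfold lsum in *; simpl; [lra|].
  assert (IH' := IH (fun k0 H => Hy k0 (or_intror H))).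
  assert (Hk : 0 <= y k < L) by (apply Hy; simpl; auto).
  assert (G : gz L (anti L (y k)) p = L/2 - 2 * circ_dist L p (y k)).
  { unfold gz. rewrite (cd_sym L p (anti L (y k))), cd_anti, (cd_sym L (y k) p) by auto. lra. }
  rewrite G. unfold gz at 1. lra.
Qed.

Theorem theorem3 (L : R) (HL : 0 < L) (n : nat) (x y : nat -> R)
  (Hx : forall k, (1 <= k <= n)%nat -> on_circle L (x k))
  (Hy : forall k, (1 <= k <= n)%nat -> on_circle L (y k)) :
  (1 <= n)%nat ->
  exists i, (1 <= i <= n)%nat /\
    sum_1n n (fun k => circ_dist L (x i) (x k))
    <= sum_1n n (fun k => circ_dist L (x i) (y k)).
Proof.
  intros Hn. apply NNPP; intro Hno.
  assert (Hall : forall i, (1 <= i <= n)%nat ->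
    sum_1n n (fun k => circ_dist L (x i) (y k)) < sum_1n n (fun k => circ_dist L (x i) (x k))).
  { intros i Hi. apply Rnot_le_lt. intro H. apply Hno. exists i. auto. }
  set (s := seq 1 n).
  assert (Hs : forall k, In k s -> (1 <= k <= n)%nat).
  { intros k Hk. unfold s in Hk. apply in_seq in Hk. lia. }
  set (Z := map x s ++ map (fun k => anti L (y k)) s).
  assert (HZ : forall z, In z Z -> 0 <= z < L).
  { intros z Hz. unfold Z in Hz. apply in_app_or in Hz. destruct Hz as [Hz|Hz];
    apply in_map_iff in Hz; destruct Hz as [k [<- Hk]].
    - apply Hx, Hs, Hk.
    - apply anti_range; auto. apply Hy, Hs, Hk. }
  assert (Hpos : forall i, (1 <= i <= n)%nat -> 0 < phiZ L Z (x i)).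
  { intros i Hi. unfold Z. rewrite phi_x; auto.
    - specialize (Hall i Hi). rewrite !sum_1n_lsum in Hall. fold s in Hall. lra.
    - apply Hx; auto.
    - intros k Hk. apply Hy, Hs, Hk. }
  destruct (build L (Z ++ map (anti L) Z) HL) as [t [Hi [Hb [HLin Hin]]]].
  { intros z Hz. apply in_app_or in Hz. destruct Hz as [Hz|Hz]; auto.
    apply in_map_iff in Hz. destruct Hz as [w [<- Hw]]. apply anti_range; auto. }
  assert (Hlast : last t 0 = L).
  { pose proof (incr_bounds 0 t Hi L (or_intror HLin)).
    pose proof (Hb _ (last_in t 0)). lra. }
  set (B := Bof (phiZ L Z)).
  assert (HB : B 0 = B L) by (unfold B, Bof; rewrite phi_0L; auto).
  assert (H1 : (1 <= 1 <= n)%nat) by lia.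
  assert (Tlt : T (phiZ L Z) B 0 t < 0).
  { apply (T_lt _ 0 t (x 1%nat) (anti L (x 1%nat)) Hi).
    - apply Hin. apply in_or_app. left. unfold Z. apply in_or_app. left.
      apply in_map. unfold s. apply in_seq. lia.
    - apply Hin. apply in_or_app. right. apply in_map. unfold Z. apply in_or_app. left.
      apply in_map. unfold s. apply in_seq. lia.
    - unfold Bof. rewrite phi_anti; auto. 2: apply Hx; auto.
      specialize (Hpos _ H1).
      destruct (Rlt_dec 0 (phiZ L Z (x 1%nat))), (Rlt_dec 0 (- phiZ L Z (x 1%nat))); lra. }
  rewrite T_phi in Tlt.
  rewrite (map_ext_in _ (fun z => 4 * (B z - B (anti L z)))) in Tlt.
  2: { intros z Hz. apply per_z; auto.
       - apply Hin. apply in_or_app. left. auto.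
       - apply Hin. apply in_or_app. right. apply in_map. auto. }
  unfold Z in Tlt. rewrite lsum_app in Tlt.
  assert (G1 : 4 * INR (length (map x s)) <=
    lsum (map (fun z => 4 * (B z - B (anti L z))) (map x s))).
  { apply lsum_ge. intros z Hz. apply in_map_iff in Hz. destruct Hz as [k [<- Hk]].
    pose proof (Hpos k (Hs k Hk)) as P.
    assert (Hxk : 0 <= x k < L) by (apply Hx, Hs, Hk).
    unfold B, Bof. rewrite phi_anti; auto.
    destruct (Rlt_dec 0 (phiZ L Z (x k))), (Rlt_dec 0 (- phiZ L Z (x k))); lra. }
  assert (G2 : -4 * INR (length (map (fun k => anti L (y k)) s)) <=
    lsum (map (fun z => 4 * (B z - B (anti L z))) (map (fun k => anti L (y k)) s))).
  { apply lsum_ge. intros z Hz. unfold B, Bof.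
    destruct (Rlt_dec 0 (phiZ L Z z)), (Rlt_dec 0 (phiZ L Z (anti L z))); lra. }
  rewrite !length_map in G1, G2. lra.
Qed.
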